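(* Let $X$ and $Y$ be independent random variables, each symmetric about $0$ (i.e. $X\overset{d}{=}-X$, $Y\overset{d}{=}-Y$). If $|X|\le_{\mathrm{st}}|Y|$, then $$|X|\le_{\mathrm{st}}|\min(X,Y)|\overset{d}{=}|\max(X,Y)|\le_{\mathrm{st}}|Y|.$$ These stochastic inequalities are strict if and only if $|X|<_{\mathrm{st}}|Y|$.
   Context: For random variables $U,V$, $U\le_{\mathrm{st}}V$ means $F_U(x)\ge F_V(x)$ for all real $x$ ($F$ the cdf), and $U<_{\mathrm{st}}V$ means additionally $F_U(x)>F_V(x)$ for at least one $x$. *)

(* Defs.v *)
From HB Require Import structures.
From mathcomp Require Import all_boot all_order all_algebra.
From mathcomp Require Import all_classical all_reals all_analysis.
Set Implicit Arguments. Unset Strict Implicit. Unset Printing Implicit Defensive.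
Import Order.TTheory GRing.Theory Num.Theory.
Local Open Scope classical_set_scope.
Local Open Scope ring_scope.

(* cdf of a real-valued function on a probability space:
   F_U(x) = P(U <= x)  (same as the library's [cdf] = distribution P U `]-oo,x],
   but for plain functions, so it applies to |X|, |min(X,Y)|, ...). *)
Definition fcdf d (T : measurableType d) (R : realType) (P : probability T R)
  (U : T -> R) (x : R) : \bar R := P (U @^-1` `]-oo, x]).

Definition st_le d (T : measurableType d) (R : realType) (P : probability T R)
  (U V : T -> R) : Prop := forall x : R, (fcdf P V x <= fcdf P U x)%E.

Definition st_lt d (T : measurableType d) (R : realType) (P : probability T R)
  (U V : T -> R) : Prop :=
  st_le P U V /\ exists x : R, (fcdf P V x < fcdf P U x)%E.

Definition eq_dist d (T : measurableType d) (R : realType) (P : probability T R)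
  (U V : T -> R) : Prop :=
  forall A : set R, measurable A -> P (U @^-1` A) = P (V @^-1` A).

Definition indep2 d (T : measurableType d) (R : realType) (P : probability T R)
  (X Y : T -> R) : Prop :=
  forall A B : set R, measurable A -> measurable B ->
    P (X @^-1` A `&` Y @^-1` B) = (P (X @^-1` A) * P (Y @^-1` B))%E.

(* Main.v *)
Require Import Defs.
From HB Require Import structures.
From mathcomp Require Import all_boot all_order all_algebra.
From mathcomp Require Import all_classical all_reals all_analysis.
From mathcomp Require Import ring lra.
Import Order.TTheory GRing.Theory Num.Theory.
Local Open Scope classical_set_scope.
Local Open Scope ring_scope.

Section S1.
Context d (T : measurableType d) (R : realType) (P : probability T R).

Lemma eq_dist_cdf (U V : T -> R) : measurable_fun setT U -> measurable_fun setT V ->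
  (forall x, fcdf P U x = fcdf P V x) -> eq_dist P U V.
Proof.
move=> mU mV h A mA.
have mpre (W : T -> R) B : measurable_fun setT W -> measurable B -> measurable (W @^-1` B).
  by move=> mW mB; rewrite -[_ @^-1` _]setTI; exact: mW.
have := @measure_unique _ R R (@measurable_realfun.RGenOInfty.G R) (fun k : nat => `](- k%:R), +oo[%classic)
  _ _ _ _ (pushforward P U) (pushforward P V) _ _ A mA.
apply.
- exact: (measurable_realfun.RGenOInfty.measurableE R).
- move=> _ _ [x ->] [y ->]; exists (Num.max x y).
  apply/seteqP; split => z /=; rewrite !in_itv/= !andbT.
    by move=> [h1 h2]; rewrite gt_max h1 h2.
  by rewrite gt_max => /andP.
- by move=> k; exists (- k%:R).
- apply/seteqP; split => // x _.
  exists (Num.truncn `|x|).+1 => //=; rewrite in_itv/= andbT ltrNl.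
  apply: (le_lt_trans _ (truncnS_gt _)).
  by rewrite -normrN ler_norm.
- move=> _ [x ->]; rewrite /pushforward.
  have E (W : T -> R) : W @^-1` `]x, +oo[ = ~` (W @^-1` `]-oo, x]).
    apply/seteqP; split => z /=; rewrite !in_itv/= andbT.
      by rewrite ltNge => /negP.
    by rewrite ltNge => /negP.
  change (P (U @^-1` `]x, +oo[) = P (V @^-1` `]x, +oo[)%classic).
  rewrite !E !probability_setC; try exact: (mpre _ _ mU (measurable_itv _));
    try exact: (mpre _ _ mV (measurable_itv _)).
  by have := h x; rewrite /fcdf => ->.
- move=> k; change (P (U @^-1` `]((- k%:R)%R : R), +oo[%classic) < +oo)%E.
  rewrite (le_lt_trans (probability_le1 _ _)) ?ltry//.
  exact: (mpre _ _ mU (measurable_itv _)).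
Qed.
End S1.

Lemma minE (R : realType) (x y t : R) : 0 <= t ->
  (`|Num.min x y| <= t) = [|| ((-t <= x <= t) && (-t <= y <= t)),
     ((-t <= x <= t) && (t < y)) | ((t < x) && (-t <= y <= t))].
Proof.
move=> t0; rewrite ler_norml le_min ge_min.
case: (lerP (-t) x) => hx1; case: (lerP x t) => hx2;
case: (lerP (-t) y) => hy1; case: (lerP y t) => hy2 //=; exfalso; lra.
Qed.

Lemma maxE (R : realType) (x y t : R) : 0 <= t ->
  (`|Num.max x y| <= t) = [|| ((-t <= x <= t) && (-t <= y <= t)),
     ((-t <= x <= t) && (y < -t)) | ((x < -t) && (-t <= y <= t))].
Proof.
move=> t0; rewrite ler_norml le_max ge_max.
case: (lerP (-t) x) => hx1; case: (lerP x t) => hx2;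
case: (lerP (-t) y) => hy1; case: (lerP y t) => hy2 //=; exfalso; lra.
Qed.

Section S.
Context d (T : measurableType d) (R : realType) (P : probability T R).
Variables X Y : T -> R.
Hypotheses (mX : measurable_fun setT X) (mY : measurable_fun setT Y).
Hypothesis ind : indep2 P X Y.

Let mpre (W : T -> R) B : measurable_fun setT W -> measurable B -> measurable (W @^-1` B).
Proof. by move=> mW mB; rewrite -[_ @^-1` _]setTI; exact: mW. Qed.

Let PE A : measurable A -> P A = (fine (P A))%:E.
Proof. by move=> mA; rewrite fineK// fin_num_measure. Qed.

Lemma cdf_abs (W : T -> R) t :
  fcdf P (fun w => `|W w|) t = P (W @^-1` `[-t, t]).
Proof.
rewrite /fcdf; congr (P _); apply/seteqP; split => w /=;
  by rewrite !in_itv/= ler_norml.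
Qed.

Lemma cdf_neg (W : T -> R) t : t < 0 -> fcdf P (fun w => `|W w|) t = 0%E.
Proof.
move=> t0; rewrite /fcdf -[X in P X](_ : set0 = _) ?measure0//.
apply/seteqP; split => w //=; rewrite in_itv/= => h.
have := normr_ge0 (W w); lra.
Qed.

Lemma part (W : T -> R) t : measurable_fun setT W -> 0 <= t ->
  (fine (P (W @^-1` `[-t, t])) + fine (P (W @^-1` `]t, +oo[))
   + fine (P (W @^-1` `]-oo, -t[)) = 1)%R.
Proof.
move=> mW t0.
have : P (W @^-1` `[-t, t] `|` (W @^-1` `]t, +oo[ `|` W @^-1` `]-oo, -t[)) = 1%E.
  rewrite -[RHS](probability_setT P); congr (P _).
  apply/seteqP; split => // w _ /=; rewrite !in_itv/= ?andbT.
  case: (lerP (-t) (W w)) => h1; case: (lerP (W w) t) => h2 /=; try by [left|right;left|right;right].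
rewrite (measureU P) ?(measureU P);
  try (by apply: measurableU; exact: (mpre _ _ mW (measurable_itv _)));
  try (by exact: (mpre _ _ mW (measurable_itv _)));
  try (by apply/seteqP; split => // w /=; rewrite !in_itv/= ?andbT; intros; lra).
move=> H; apply: EFin_inj; rewrite !EFinD !fineK ?fin_num_measure -?addeA //.
all: exact: (mpre _ _ mW (measurable_itv _)).
Qed.

Lemma symm (W : T -> R) t : eq_dist P W (fun w => - W w) ->
  P (W @^-1` `]t, +oo[) = P (W @^-1` `]-oo, -t[).
Proof.
move=> h; rewrite (h _ (measurable_itv `]-oo, -t[)); congr (P _).
by apply/seteqP; split => w /=; rewrite !in_itv/= ?andbT ltrN2.
Qed.

Lemma cdf_min_pos t : 0 <= t ->
  fcdf P (fun w => `|Num.min (X w) (Y w)|) t =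
  (P (X @^-1` `[(-t)%R, t] `&` Y @^-1` `[(-t)%R, t]) +
  (P (X @^-1` `[(-t)%R, t] `&` Y @^-1` `]t, +oo[) +
   P (X @^-1` `]t, +oo[ `&` Y @^-1` `[(-t)%R, t])))%E.
Proof.
move=> t0; rewrite /fcdf.
have -> : (fun w => `|Num.min (X w) (Y w)|) @^-1` `]-oo, t] =
  (X @^-1` `[(-t)%R, t] `&` Y @^-1` `[(-t)%R, t]) `|`
  ((X @^-1` `[(-t)%R, t] `&` Y @^-1` `]t, +oo[) `|`
   (X @^-1` `]t, +oo[ `&` Y @^-1` `[(-t)%R, t])).
  apply/seteqP; split => w /=; rewrite !in_itv/= ?andbT.
    rewrite minE// => /orP[/andP[h1 h2]|/orP[]/andP[h1 h2]];
      [left|right;left|right;right]; by split.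
  by move=> [[h1 h2]|[[h1 h2]|[h1 h2]]]; rewrite minE// h1 h2 /= ?orbT.
rewrite (measureU P) ?(measureU P) //;
  try (by apply: measurableU; apply: measurableI;
       (exact: (mpre _ _ mX (measurable_itv _)) || exact: (mpre _ _ mY (measurable_itv _))));
  try (by apply: measurableI;
       (exact: (mpre _ _ mX (measurable_itv _)) || exact: (mpre _ _ mY (measurable_itv _))));
  try (by apply/seteqP; split => // w /=; rewrite !in_itv/= ?andbT; intros; lra).
Qed.

Lemma cdf_max_pos t : 0 <= t ->
  fcdf P (fun w => `|Num.max (X w) (Y w)|) t =
  (P (X @^-1` `[(-t)%R, t] `&` Y @^-1` `[(-t)%R, t]) +
  (P (X @^-1` `[(-t)%R, t] `&` Y @^-1` `]-oo, (-t)%R[) +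
   P (X @^-1` `]-oo, (-t)%R[ `&` Y @^-1` `[(-t)%R, t])))%E.
Proof.
move=> t0; rewrite /fcdf.
have -> : (fun w => `|Num.max (X w) (Y w)|) @^-1` `]-oo, t] =
  (X @^-1` `[(-t)%R, t] `&` Y @^-1` `[(-t)%R, t]) `|`
  ((X @^-1` `[(-t)%R, t] `&` Y @^-1` `]-oo, (-t)%R[) `|`
   (X @^-1` `]-oo, (-t)%R[ `&` Y @^-1` `[(-t)%R, t])).
  apply/seteqP; split => w /=; rewrite !in_itv/= ?andbT.
    rewrite maxE// => /orP[/andP[h1 h2]|/orP[]/andP[h1 h2]];
      [left|right;left|right;right]; by split.
  by move=> [[h1 h2]|[[h1 h2]|[h1 h2]]]; rewrite maxE// h1 h2 /= ?orbT.
rewrite (measureU P) ?(measureU P) //;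
  try (by apply: measurableU; apply: measurableI;
       (exact: (mpre _ _ mX (measurable_itv _)) || exact: (mpre _ _ mY (measurable_itv _))));
  try (by apply: measurableI;
       (exact: (mpre _ _ mX (measurable_itv _)) || exact: (mpre _ _ mY (measurable_itv _))));
  try (by apply/seteqP; split => // w /=; rewrite !in_itv/= ?andbT; intros; lra).
Qed.

Lemma cdf_min_eq t : eq_dist P X (fun w => - X w) -> eq_dist P Y (fun w => - Y w) ->
  fcdf P (fun w => `|Num.min (X w) (Y w)|) t =
  ((fine (fcdf P (fun w => `|X w|) t) + fine (fcdf P (fun w => `|Y w|) t)) / 2)%:E.
Proof.
move=> sX sY; case: (ltP t 0) => t0.
  rewrite (cdf_neg (fun w => Num.min (X w) (Y w)) _ t0) (cdf_neg X _ t0) (cdf_neg Y _ t0) /=.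
  congr EFin; ring.
rewrite cdf_min_pos// !cdf_abs !(ind _ _ (measurable_itv _) (measurable_itv _)).
have pX := part X t mX t0; have pY := part Y t mY t0.
rewrite -(symm X t sX) in pX; rewrite -(symm Y t sY) in pY.
rewrite (PE _ (mpre _ _ mX (measurable_itv `[-t, t])))
  (PE _ (mpre _ _ mX (measurable_itv `]t, +oo[)))
  (PE _ (mpre _ _ mY (measurable_itv `[-t, t])))
  (PE _ (mpre _ _ mY (measurable_itv `]t, +oo[))) /=.
rewrite -!EFinM -!EFinD; congr EFin.
set a0 := fine _ in pX *; set a1 := fine _ in pX *.
set b0 := fine _ in pY *; set b1 := fine _ in pY *.
have -> : a1 = (1 - a0) / 2 by lra.
have -> : b1 = (1 - b0) / 2 by lra.
by field.
Qed.

Lemma cdf_max_eq t : eq_dist P X (fun w => - X w) -> eq_dist P Y (fun w => - Y w) ->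
  fcdf P (fun w => `|Num.max (X w) (Y w)|) t =
  ((fine (fcdf P (fun w => `|X w|) t) + fine (fcdf P (fun w => `|Y w|) t)) / 2)%:E.
Proof.
move=> sX sY; case: (ltP t 0) => t0.
  rewrite (cdf_neg (fun w => Num.max (X w) (Y w)) _ t0) (cdf_neg X _ t0) (cdf_neg Y _ t0) /=.
  congr EFin; ring.
rewrite cdf_max_pos// !cdf_abs !(ind _ _ (measurable_itv _) (measurable_itv _)).
have pX := part X t mX t0; have pY := part Y t mY t0.
rewrite (symm X t sX) in pX; rewrite (symm Y t sY) in pY.
rewrite (PE _ (mpre _ _ mX (measurable_itv `[-t, t])))
  (PE _ (mpre _ _ mX (measurable_itv `]-oo, -t[)))
  (PE _ (mpre _ _ mY (measurable_itv `[-t, t])))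
  (PE _ (mpre _ _ mY (measurable_itv `]-oo, -t[))) /=.
rewrite -!EFinM -!EFinD; congr EFin.
set a0 := fine _ in pX *; set a1 := fine _ in pX *.
set b0 := fine _ in pY *; set b1 := fine _ in pY *.
have -> : a1 = (1 - a0) / 2 by lra.
have -> : b1 = (1 - b0) / 2 by lra.
by field.
Qed.
End S.

Lemma FE d (T : measurableType d) (R : realType) (P : probability T R) (W : T -> R) t :
  measurable_fun setT W -> fcdf P W t = (fine (fcdf P W t))%:E.
Proof.
move=> mW; rewrite fineK// /fcdf fin_num_measure//.
by rewrite -[_ @^-1` _]setTI; apply: mW => //; exact: measurable_itv.
Qed.

Theorem theorem5p1 (d : measure_display) (T : measurableType d) (R : realType)
  (P : probability T R) (X Y : {RV P >-> R}) :
  indep2 P X Y ->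
  eq_dist P X (fun w => - X w) ->
  eq_dist P Y (fun w => - Y w) ->
  st_le P (fun w => `|X w|) (fun w => `|Y w|) ->
  [/\ st_le P (fun w => `|X w|) (fun w => `|Num.min (X w) (Y w)|),
      eq_dist P (fun w => `|Num.min (X w) (Y w)|) (fun w => `|Num.max (X w) (Y w)|),
      st_le P (fun w => `|Num.max (X w) (Y w)|) (fun w => `|Y w|),
      (st_lt P (fun w => `|X w|) (fun w => `|Num.min (X w) (Y w)|) <->
         st_lt P (fun w => `|X w|) (fun w => `|Y w|))
    & (st_lt P (fun w => `|Num.max (X w) (Y w)|) (fun w => `|Y w|) <->
         st_lt P (fun w => `|X w|) (fun w => `|Y w|))].
Proof.
move=> ind sX sY le.
have mX : measurable_fun setT X by exact: measurable_funPT.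
have mY : measurable_fun setT Y by exact: measurable_funPT.
have maX : measurable_fun setT (fun w => `|X w|).
  exact: measurableT_comp (@measurable_realfun.normr_measurable R setT) mX.
have maY : measurable_fun setT (fun w => `|Y w|).
  exact: measurableT_comp (@measurable_realfun.normr_measurable R setT) mY.
have mmin : measurable_fun setT (fun w => `|Num.min (X w) (Y w)|).
  exact: measurableT_comp (@measurable_realfun.normr_measurable R setT) (measurable_realfun.measurable_minr mX mY).
have mmax : measurable_fun setT (fun w => `|Num.max (X w) (Y w)|).
  exact: measurableT_comp (@measurable_realfun.normr_measurable R setT) (measurable_realfun.measurable_maxr mX mY).
set F := fun t => fine (fcdf P (fun w => `|X w|) t).
set G := fun t => fine (fcdf P (fun w => `|Y w|) t).
have hmin t : fcdf P (fun w => `|Num.min (X w) (Y w)|) t = ((F t + G t) / 2)%:E.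
  exact: cdf_min_eq.
have hmax t : fcdf P (fun w => `|Num.max (X w) (Y w)|) t = ((F t + G t) / 2)%:E.
  exact: cdf_max_eq.
have hX t : fcdf P (fun w => `|X w|) t = (F t)%:E by exact: FE.
have hY t : fcdf P (fun w => `|Y w|) t = (G t)%:E by exact: FE.
have hle t : G t <= F t by have := le t; rewrite hX hY lee_fin.
split.
- by move=> t; rewrite hmin hX lee_fin; have := hle t; lra.
- by apply: eq_dist_cdf => // t; rewrite hmin hmax.
- by move=> t; rewrite hmax hY lee_fin; have := hle t; lra.
- split.
    move=> [_ [x]]; rewrite hmin hX lte_fin => hx; split => //.
    by exists x; rewrite hX hY lte_fin; lra.
  move=> [_ [x]]; rewrite hX hY lte_fin => hx; split.
    by move=> t; rewrite hmin hX lee_fin; have := hle t; lra.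
  by exists x; rewrite hmin hX lte_fin; lra.
- split.
    move=> [_ [x]]; rewrite hmax hY lte_fin => hx; split => //.
    by exists x; rewrite hX hY lte_fin; lra.
  move=> [_ [x]]; rewrite hX hY lte_fin => hx; split.
    by move=> t; rewrite hmax hY lee_fin; have := hle t; lra.
  by exists x; rewrite hmax hY lte_fin; lra.
Qed.
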